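(* Let $f:\mathbb{Z}^n\to\mathbb{R}\cup\{+\infty\}$ be a function satisfying condition (SSQM$^\natural$) with $\arg\min f\neq\emptyset$, and let $x\in\mathrm{dom}\,f$. (i) Let $i\in N$ and suppose that the minimum of $f(x-\chi_i+\chi_{j'})$ over $j'\in N\cup\{0\}$ is attained by some $j\in N$ (i.e., $j\neq 0$). Then there exists a minimizer $x^*$ of $f$ satisfying $x^*(j)\ge x(j)+1$ if $j\in N\setminus\{i\}$, and $x^*(i)\ge x(i)$ if $j=i$. (ii) Let $j\in N$ and suppose that the minimum of $f(x-\chi_{i'}+\chi_j)$ over $i'\in N\cup\{0\}$ is attained by some $i\in N$ (i.e., $i\neq 0$). Then there exists a minimizer $x^*$ of $f$ satisfying $x^*(i)\le x(i)-1$ if $i\in N\setminus\{j\}$, and $x^*(j)\le x(j)$ if $i=j$. (iii) Suppose that the minimum of $f(x+\chi_{j'})$ over $j'\in N\cup\{0\}$ is attained by some $j\in N$ (i.e., $j\ne 0$). Then there exists a minimizer $x^*$ of $f$ satisfying $x^*(j)\ge x(j)+1$. (iv) Suppose that the minimum of $f(x-\chi_{i'})$ over $i'\in N\cup\{0\}$ is attained by some $i\in N$ (i.e., $i\neq 0$). Then there exists a minimizer $x^*$ of $f$ satisfying $x^*(i)\le x(i)-1$.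
   Context: $N=\{1,\dots,n\}$. For $i\in N$, $\chi_i\in\{0,1\}^n$ is the characteristic vector of $i$, and $\chi_0=0$. $\mathrm{dom}\,f=\{x\in\mathbb{Z}^n\mid f(x)<+\infty\}$. For $x,y\in\mathbb{Z}^n$, $\mathrm{supp}^+(x-y)=\{i\in N\mid x(i)>y(i)\}$ and $\mathrm{supp}^-(x-y)=\{j\in N\mid x(j)<y(j)\}$. Condition (SSQM$^\natural$): for all $x,y\in\mathrm{dom}\,f$ and all $i\in\mathrm{supp}^+(x-y)$ there exists $j\in\mathrm{supp}^-(x-y)\cup\{0\}$ such that at least one of the following holds: (a) $f(x-\chi_i+\chi_j)<f(x)$; (b) $f(y+\chi_i-\chi_j)<f(y)$; (c) $f(x-\chi_i+\chi_j)=f(x)$ and $f(y+\chi_i-\chi_j)=f(y)$. *)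

(* Defs.v *)
From mathcomp Require Import all_boot all_order all_algebra.
From mathcomp Require Import constructive_ereal.
Set Implicit Arguments. Unset Strict Implicit. Unset Printing Implicit Defensive.
Import Order.TTheory GRing.Theory Num.Theory.
Local Open Scope ring_scope.

(* integer vectors in Z^n, indexed by N = 'I_n (i.e. {0,...,n-1}) *)
Definition vec (n : nat) := 'I_n -> int.

(* N ∪ {0} is represented by option 'I_n : Some i = i ∈ N, None = 0.
   chi (Some i) = characteristic vector of i, chi None = 0 vector. *)
Definition chi (n : nat) (o : option 'I_n) : vec n :=
  fun k => if o is Some i then ((k == i) : nat)%:Z else 0.

Definition shift (n : nat) (x : vec n) (a b : option 'I_n) : vec n :=
  fun k => x k - chi a k + chi b k.

Local Open Scope ereal_scope.

Definition in_dom (R : realDomainType) (n : nat) (f : vec n -> \bar R) (x : vec n) : Prop :=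
  f x < +oo.

Definition in_suppm0 (n : nat) (x y : vec n) (j : option 'I_n) : bool :=
  if j is Some j' then (x j' < y j')%R else true.

Definition SSQMnat (R : realDomainType) (n : nat) (f : vec n -> \bar R) : Prop :=
  forall x y : vec n, in_dom f x -> in_dom f y ->
  forall i : 'I_n, (y i < x i)%R ->
  exists j : option 'I_n, in_suppm0 x y j /\
    (f (shift x (Some i) j) < f x
     \/ f (shift y j (Some i)) < f y
     \/ (f (shift x (Some i) j) = f x /\ f (shift y j (Some i)) = f y)).

Definition is_minimizer (R : realDomainType) (n : nat) (f : vec n -> \bar R) (x : vec n) : Prop :=
  forall y : vec n, f x <= f y.

(* Main.v *)
Require Import Defs.
From mathcomp Require Import all_boot all_order all_algebra.
From mathcomp Require Import constructive_ereal.
From Stdlib Require Import FunctionalExtensionality.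
From mathcomp Require Import zify.
Import Order.TTheory GRing.Theory Num.Theory.
Local Open Scope ring_scope.
Local Open Scope ereal_scope.

Lemma chi_ne (n : nat) (k : option 'I_n) (j : 'I_n) : k != Some j -> chi k j = 0%R.
Proof. case: k => [k|] hk; rewrite /chi //; case: (j =P k) => // ejk; by rewrite ejk eqxx in hk. Qed.

Lemma chi_eq (n : nat) (j : 'I_n) : chi (Some j) j = 1%R.
Proof. by rewrite /chi eqxx. Qed.

Lemma lemA (R : realDomainType) (n : nat) (f : vec n -> \bar R) (hf : SSQMnat f)
  (y : vec n) (j : 'I_n) (hy : in_dom f y)
  (hle : forall k, f y <= f (shift y (Some j) k)) :
  forall m : nat, forall z, is_minimizer f z -> (y j - z j <= m%:Z)%R ->
  exists z', is_minimizer f z' /\ (y j <= z' j)%R.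
Proof.
elim=> [|m IH] z hz hm.
  by exists z; split => //; rewrite -subr_le0.
case: (lerP (y j) (z j)) => hyz; first by exists z.
have hzd : in_dom f z by rewrite /in_dom; apply: le_lt_trans (hz y) hy.
have [k [hk H]] := hf _ _ hy hzd j hyz.
have hkj : k != Some j.
  by case: k hk {H} => //= k hk; apply/eqP => -[ek]; rewrite ek ltNge ltW in hk.
case: H => [H|[H|[_ H]]].
- by move: (hle k); rewrite leNgt H.
- by move: (hz (shift z k (Some j))); rewrite leNgt H.
- apply: (IH (shift z k (Some j))).
    by move=> w; rewrite H; apply: hz.
  rewrite /shift chi_eq chi_ne // subr0.
  move: hm; rewrite -!/(Posz _); lia.
Qed.

Lemma lemB (R : realDomainType) (n : nat) (f : vec n -> \bar R) (hf : SSQMnat f)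
  (y : vec n) (i : 'I_n) (hy : in_dom f y)
  (hle : forall k, f y <= f (shift y k (Some i))) :
  forall m : nat, forall z, is_minimizer f z -> (z i - y i <= m%:Z)%R ->
  exists z', is_minimizer f z' /\ (z' i <= y i)%R.
Proof.
elim=> [|m IH] z hz hm.
  by exists z; split => //; rewrite -subr_le0.
case: (lerP (z i) (y i)) => hyz; first by exists z.
have hzd : in_dom f z by rewrite /in_dom; apply: le_lt_trans (hz y) hy.
have [k [hk H]] := hf _ _ hzd hy i hyz.
have hkj : k != Some i.
  by case: k hk {H} => //= k hk; apply/eqP => -[ek]; rewrite ek ltNge ltW in hk.
case: H => [H|[H|[H _]]].
- by move: (hz (shift z (Some i) k)); rewrite leNgt H.
- by move: (hle k); rewrite leNgt H.
- apply: (IH (shift z (Some i) k)).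
    by move=> w; rewrite H; apply: hz.
  rewrite /shift chi_eq chi_ne // addr0.
  move: hm; rewrite -!/(Posz _); lia.
Qed.

Theorem theorem3p1 (R : realDomainType) (n : nat) (f : vec n -> \bar R)
  (f_noninf : forall z : vec n, f z != -oo)
  (hf : SSQMnat f)
  (hmin : exists z : vec n, is_minimizer f z)
  (x : vec n) (hx : in_dom f x) :
  (* (i) *)
  (forall (i j : 'I_n),
     (forall j' : option 'I_n, f (shift x (Some i) (Some j)) <= f (shift x (Some i) j')) ->
     exists xs : vec n, is_minimizer f xs /\
       (if j != i then (x j + 1 <= xs j)%R else (x i <= xs i)%R)) /\
  (* (ii) *)
  (forall (i j : 'I_n),
     (forall i' : option 'I_n, f (shift x (Some i) (Some j)) <= f (shift x i' (Some j))) ->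
     exists xs : vec n, is_minimizer f xs /\
       (if i != j then (xs i <= x i - 1)%R else (xs j <= x j)%R)) /\
  (* (iii) *)
  (forall j : 'I_n,
     (forall j' : option 'I_n, f (shift x None (Some j)) <= f (shift x None j')) ->
     exists xs : vec n, is_minimizer f xs /\ (x j + 1 <= xs j)%R) /\
  (* (iv) *)
  (forall i : 'I_n,
     (forall i' : option 'I_n, f (shift x (Some i) None) <= f (shift x i' None)) ->
     exists xs : vec n, is_minimizer f xs /\ (xs i <= x i - 1)%R).
Proof.
have [z hz] := hmin.
have Ex : forall a, shift x a a = x.
  by move=> a; apply: functional_extensionality => w; rewrite /shift subrK.
split; [|split; [|split]].
- move=> i j hij; set y := shift x (Some i) (Some j).
  have hy : in_dom f y by rewrite /in_dom; apply: le_lt_trans (hij (Some i)) _; rewrite Ex.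
  have hle : forall k, f y <= f (shift y (Some j) k).
    move=> k; have -> : shift y (Some j) k = shift x (Some i) k.
      by apply: functional_extensionality => w; rewrite /y /shift addrK.
    exact: hij.
  have [z' [hz' hz'j]] := @lemA _ _ f hf y _ hy hle `|y j - z j|%N z hz ltac:(lia).
  exists z'; split => //; move: hz'j; rewrite /y /shift /chi.
  by case: (j =P i) => [->|hji]; rewrite ?eqxx /=; lia.
- move=> i j hij; set y := shift x (Some i) (Some j).
  have hy : in_dom f y by rewrite /in_dom; apply: le_lt_trans (hij (Some j)) _; rewrite Ex.
  have hle : forall k, f y <= f (shift y k (Some i)).
    move=> k; have -> : shift y k (Some i) = shift x k (Some j).
      by apply: functional_extensionality => w; rewrite /y /shift; lia.
    exact: hij.
  have [z' [hz' hz'j]] := @lemB _ _ f hf y _ hy hle `|z i - y i|%N z hz ltac:(lia).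
  exists z'; split => //; move: hz'j; rewrite /y /shift /chi.
  by case: (i =P j) => [->|hji]; rewrite ?eqxx /=; lia.
- move=> j hij; set y := shift x None (Some j).
  have hy : in_dom f y by rewrite /in_dom; apply: le_lt_trans (hij None) _; rewrite Ex.
  have hle : forall k, f y <= f (shift y (Some j) k).
    move=> k; have -> : shift y (Some j) k = shift x None k.
      by apply: functional_extensionality => w; rewrite /y /shift addrK.
    exact: hij.
  have [z' [hz' hz'j]] := @lemA _ _ f hf y _ hy hle `|y j - z j|%N z hz ltac:(lia).
  exists z'; split => //; move: hz'j; rewrite /y /shift /chi eqxx /=; lia.
- move=> i hij; set y := shift x (Some i) None.
  have hy : in_dom f y by rewrite /in_dom; apply: le_lt_trans (hij None) _; rewrite Ex.
  have hle : forall k, f y <= f (shift y k (Some i)).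
    move=> k; have -> : shift y k (Some i) = shift x k None.
      by apply: functional_extensionality => w; rewrite /y /shift; lia.
    exact: hij.
  have [z' [hz' hz'j]] := @lemB _ _ f hf y _ hy hle `|z i - y i|%N z hz ltac:(lia).
  exists z'; split => //; move: hz'j; rewrite /y /shift /chi eqxx /=; lia.
Qed.
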